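(* Let $\Gamma'\subset\Gamma$ be elliptic graphs, $\Gamma'$ a proper connected full subgraph, with index of extension $i=i_{(\Gamma',\Gamma)}$. Let $j\ge i-1$ and $\check\ell\in Supp_j(\check P_0^\Gamma)$, written $\check\ell=C^\Gamma_j+\sum_{v\in\mathcal V(\Gamma)\setminus\mathcal V(B^\Gamma_{j+1})}m_vE_v$ with $m_v\in\mathbb Z_{\ge0}$ (and $m_v:=0$ for $v\in\mathcal V(B^\Gamma_{j+1})$). Then (1) $(\check\pi_{(\Gamma',\Gamma)}(\check\ell),E_v)_{\Gamma'}=(\check\ell,E_v)_\Gamma$ for every $v\in\mathcal V(\Gamma')\setminus\partial_\Gamma(\Gamma')$; (2) $(\check\pi_{(\Gamma',\Gamma)}(\check\ell),E_v)_{\Gamma'}=(\check\ell,E_v)_\Gamma-\sum_{u\in\partial_{\Gamma'}(\Gamma)_v}m_u$ for every $v\in\partial_\Gamma(\Gamma')$.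
   Context: For a decorated tree $G$ (vertex set $\mathcal V(G)$, integer decorations $e_v$, genera zero, negative definite form $(\,,\,)_G$ on $L(G)=\mathbb Z\langle E_v\rangle$ with $(E_v,E_v)=e_v$, $(E_v,E_w)=1$ for adjacent $v\ne w$, $0$ otherwise) let $L'(G)$ be the dual lattice, $[l']$ the class in $L'(G)/L(G)$, $E_v^*$ with $(E_v^*,E_w)=-\delta_{vw}$, $\delta_v$ valency, $E^G=\sum E_v$, $Z_K^G$ with $(Z_K^G,E_v)=e_v+2$, $\chi(l')=-(l',l'-Z_K^G)/2$; $\ge$ coordinatewise, $\prec$ strict in all coordinates, $l>0$ if $l\ge0,l\ne0$, $|l'|$ the support, $x|_{G'}$ restriction of coefficients to the vertices of $G'$. $\mathcal S'(G)=\{l':(l',E_v)\le0\ \forall v\}$, $s_h=\min\{l'\in\mathcal S'(G):[l']=h\}$, $Z_{min}(B)$ the minimal nonzero element of $\mathcal S'(B)\cap L(B)$. $Z^G(\mathbf t)=\sum z^G(l')\mathbf t^{l'}$ the Taylor expansion at $0$ of $\prod_v(1-\mathbf t^{E_v^*})^{\delta_v-2}$; $Supp(P_0^G)=\{\ell\in L(G):\ell\not\prec0,\ z^G(Z^G_K-E^G-\ell)\ne0\}$. Elliptic graph: $e_v\le-2$ for all $v$, $\min_{l\in L(G),l>0}\chi(l)=0$. NN-elliptic sequence: $B^G_{-1}=G$, $Z_{B_{-1}}=s_{[Z^G_K]}$, $B^G_0=|Z^G_K-s_{[Z^G_K]}|$; for $j\ge0$, $Z_{B_j}=Z_{min}(B^G_j)$,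 and if $Z^G_K-\sum_{i=-1}^jZ_{B_i}\ne0$ then $B^G_{j+1}=|Z^G_K-\sum_{i=-1}^jZ_{B_i}|$; $m$ is the index with $Z^G_K=\sum_{i=-1}^mZ_{B_i}$; $C^G_j=\sum_{i=-1}^jZ_{B_i}$. For $\ell\in Supp(P_0^G)$ with $\mathcal V^{<0}(\ell)=\{v:\ell_v<0\}$, the associated cycle is the unique $l'$ with $\ell=Z^G_K-E^G-l'-\sum_{v\in\mathcal V^{<0}(\ell)}m_vE_v$, $l'\le Z^G_K$, $l'_v=(Z^G_K)_v$ on $\mathcal V^{<0}(\ell)$, $m_v\in\mathbb Z_{\ge0}$; $Supp_j(\check P_0^G)=\{Z^G_K-E^G-\ell:\ell\in Supp(P_0^G)$ with associated cycle $C^G_j\}$. $\partial_\Gamma(\Gamma')$ is the set of vertices of $\Gamma'$ adjacent to a vertex of $\Gamma\setminus\Gamma'$; for $v\in\partial_\Gamma(\Gamma')$, $\partial_{\Gamma'}(\Gamma)_v$ is the set of neighbours of $v$ in $\Gamma\setminus\Gamma'$. $\check\pi_{(\Gamma',\Gamma)}(x)=Z_K^{\Gamma'}-E^{\Gamma'}-(Z_K^\Gamma-E^\Gamma-x)|_{\Gamma'}$. It is known that there is a unique integer $i_{(\Gamma',\Gamma)}\ge0$ (index of the extension) with $B^\Gamma_i\subseteq\Gamma'\subsetneq B^\Gamma_{i-1}$. *)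

(* Defs.v *)
(* Decorated trees on the vertex type 'I_n; full subgraphs are
   vertex subsets S : {set 'I_n}; cycles (elements of L(S) (x) Q, in particular of
   L'(S)) are rational coordinate vectors w.r.t. the basis (E_v)_v, supported on S. *)
From mathcomp Require Import all_boot all_order all_algebra.
Set Implicit Arguments. Unset Strict Implicit. Unset Printing Implicit Defensive.
Import Order.TTheory GRing.Theory Num.Theory.
Local Open Scope ring_scope.

Section Graph.
Variables (n : nat) (adj : rel 'I_n) (e : 'I_n -> int).

Definition cyc := {ffun 'I_n -> rat}.

Definition Imat (v w : 'I_n) : rat :=
  if v == w then (e v)%:~R else if adj v w then 1 else 0.

Definition iform (S : {set 'I_n}) (x y : cyc) : rat :=
  \sum_(v in S) \sum_(w in S) x v * y w * Imat v w.

Definition Ebase (v : 'I_n) : cyc := [ffun w => (w == v)%:R].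
Definition Eset (S : {set 'I_n}) : cyc := [ffun w => (w \in S)%:R].

Definition supported (S : {set 'I_n}) (x : cyc) := forall v, v \notin S -> x v = 0.
Definition integral (x : cyc) := forall v, x v \is a Num.int.
Definition inL (S : {set 'I_n}) (x : cyc) := supported S x /\ integral x.
Definition inL' (S : {set 'I_n}) (x : cyc) :=
  supported S x /\ forall v, v \in S -> iform S x (Ebase v) \is a Num.int.

(* The unique x supported on S with (x, E_v)_S = f v for all v in S
   (S-block of the intersection matrix, padded by -1 on the diagonal outside S;
   invertible since the form is negative definite). *)
Definition padM (S : {set 'I_n}) : 'M[rat]_n :=
  \matrix_(v, w) (if (v \in S) && (w \in S) then Imat v w else - (v == w)%:R).
Definition solve (S : {set 'I_n}) (f : 'I_n -> rat) : cyc :=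
  [ffun w => ((\row_v (if v \in S then f v else 0)) *m invmx (padM S)) ord0 w].

Definition ZK (S : {set 'I_n}) : cyc := solve S (fun v => (e v)%:~R + 2).
Definition Estar (S : {set 'I_n}) (v : 'I_n) : cyc := solve S (fun w => - (w == v)%:R).
Definition chi (S : {set 'I_n}) (x : cyc) : rat := - iform S x (x - ZK S) / 2.

Definition cle (x y : cyc) := forall v, x v <= y v.
Definition cprec (S : {set 'I_n}) (x y : cyc) := forall v, v \in S -> x v < y v.
Definition cpos (x : cyc) := cle 0 x /\ x <> 0.
Definition supp (x : cyc) : {set 'I_n} := [set v | x v != 0].
Definition restr (S : {set 'I_n}) (x : cyc) : cyc := [ffun v => if v \in S then x v else 0].
Definition valency (S : {set 'I_n}) (v : 'I_n) : nat := #|[set w in S | adj v w]|.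

Definition Sprime (S : {set 'I_n}) (x : cyc) :=
  inL' S x /\ forall v, v \in S -> iform S x (Ebase v) <= 0.
Definition is_min (P : cyc -> Prop) (x : cyc) := P x /\ forall y, P y -> cle x y.
Definition is_s_ZK (S : {set 'I_n}) (x : cyc) := is_min (fun y => Sprime S y /\ integral (y - ZK S)) x.
Definition is_Zmin (B : {set 'I_n}) (x : cyc) := is_min (fun y => Sprime B y /\ integral y /\ y <> 0) x.

(* coefficient of x^m in the Taylor expansion of (1 - x)^k, k : int *)
Definition taylor (k : int) (m : nat) : int :=
  if (0 <= k)%R then (-1) ^+ m * ('C(`|k|%N, m))%:Z else ('C((m + `|k|).-1, m))%:Z.

(* z^S(x): coefficient of t^x in prod_{v in S} (1 - t^{E_v^*})^{delta_v - 2};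
   it is the sum over the tuples (k_v) with sum_v k_v E_v^* = x.  Every such tuple
   satisfies k_v = -(x, E_v)_S, so the sum over k_v < N below is exhaustive. *)
Definition zcoef (S : {set 'I_n}) (x : cyc) : int :=
  let N := (\sum_(v in S) `|numq (iform S x (Ebase v))|%N).+1 in
  \sum_(k : {ffun 'I_n -> 'I_N} |
          [forall v, (v \notin S) ==> (val (k v) == 0%N)] &&
          ([ffun w => \sum_(v in S) (val (k v))%:R * Estar S v w] == x))
    \prod_(v in S) taylor ((valency S v)%:Z - 2) (val (k v)).

Definition inSuppP0 (S : {set 'I_n}) (l : cyc) :=
  inL S l /\ ~ cprec S l 0 /\ zcoef S (ZK S - Eset S - l) != 0.

Definition assoc (S : {set 'I_n}) (l l' : cyc) :=
  exists m : 'I_n -> nat,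
    l = ZK S - Eset S - l' - [ffun v => if l v < 0 then (m v)%:R else 0]
    /\ cle l' (ZK S) /\ (forall v, l v < 0 -> l' v = ZK S v).

Definition inSuppj (S : {set 'I_n}) (C lc : cyc) :=
  exists l, inSuppP0 S l /\ assoc S l C /\ lc = ZK S - Eset S - l.

(* Partial sums: Csum Z k = sum_{i <= k} Z i.  With the index shift
   B k = B_{k-1}, Z k = Z_{B_{k-1}}, Csum Z k = C_{k-1}, M = m + 1. *)
Definition Csum (Z : nat -> cyc) (k : nat) : cyc := \sum_(i < k.+1) Z i.

Definition NNseq (S : {set 'I_n}) (B : nat -> {set 'I_n}) (Z : nat -> cyc) (M : nat) :=
  [/\ B 0%N = S /\ is_s_ZK S (Z 0%N),
      (forall k, (1 <= k <= M)%N -> is_Zmin (B k) (Z k)),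
      (forall k, (k < M)%N -> Csum Z k <> ZK S),
      Csum Z M = ZK S &
      (forall k, (k <= M)%N -> B k.+1 = supp (ZK S - Csum Z k))].

Definition picheck (S' : {set 'I_n}) (x : cyc) : cyc :=
  ZK S' - Eset S' - restr S' (ZK setT - Eset setT - x).

Definition boundary (S' : {set 'I_n}) : {set 'I_n} :=
  [set v in S' | [exists u, (u \notin S') && adj v u]].
Definition nbr_out (S' : {set 'I_n}) (v : 'I_n) : {set 'I_n} :=
  [set u | (u \notin S') && adj v u].

Definition connected_sub (S : {set 'I_n}) :=
  forall u v, u \in S -> v \in S ->
    connect [rel x y | [&& adj x y, x \in S & y \in S]] u v.

Definition negdef (S : {set 'I_n}) :=
  forall x : cyc, supported S x -> x <> 0 -> iform S x x < 0.

(* decorated tree (genera zero) with negative definite intersection form *)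
Definition decorated_tree :=
  [/\ (0 < n)%N /\ symmetric adj, irreflexive adj, connected_sub setT,
      #|[set p : 'I_n * 'I_n | adj p.1 p.2]| = (2 * n.-1)%N & negdef setT].

Definition elliptic (S : {set 'I_n}) :=
  [/\ forall v, v \in S -> e v <= -2,
      forall l, inL S l -> cpos l -> 0 <= chi S l &
      exists2 l, inL S l /\ cpos l & chi S l = 0].

End Graph.

(* Main.v *)
Require Import Defs.
From mathcomp Require Import all_boot all_order all_algebra ring lra.
Set Implicit Arguments. Unset Strict Implicit. Unset Printing Implicit Defensive.
Import Order.TTheory GRing.Theory Num.Theory.
Local Open Scope ring_scope.

Lemma sumS n (S : {set 'I_n}) (F : 'I_n -> rat) :
  (forall v, v \notin S -> F v = 0) -> \sum_(v in setT) F v = \sum_(v in S) F v.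
Proof.
move=> H; rewrite [RHS]big_mkcond [LHS]big_mkcond; apply: eq_bigr => v _.
by rewrite in_setT; case: ifP => // /negbT /H.
Qed.

Lemma padM_unit n adj e (S : {set 'I_n}) : negdef adj e setT -> padM adj e S \in unitmx.
Proof.
move=> nd; rewrite unitmxE unitfE; apply/negP => /det0P [u u0 uP].
pose x : cyc n := [ffun w => u ord0 w].
have out : forall w, w \notin S -> x w = 0.
  move=> w wS; have := congr1 (fun M : 'M[rat]_(1,n) => M ord0 w) uP; rewrite !mxE => H.
  rewrite (bigD1 w) //= big1 ?addr0 in H; last first.
    by move=> z zw; rewrite mxE (negbTE wS) andbF (negbTE zw) oppr0 mulr0.
  by rewrite mxE (negbTE wS) andbF eqxx mulrN1 in H; rewrite ffunE -[LHS]opprK H oppr0.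
have x0 : x <> 0.
  move=> h; apply/negP: u0; rewrite negbK; apply/eqP/rowP => w.
  by have := congr1 (fun f : cyc n => f w) h; rewrite !ffunE mxE.
have inS : forall w, w \in S -> \sum_(z in S) x z * Imat adj e z w = 0.
  move=> w wS; have := congr1 (fun M : 'M[rat]_(1,n) => M ord0 w) uP; rewrite !mxE => H.
  rewrite -[RHS]H [RHS](bigID (fun z => z \in S)) /= [X in _ = _ + X]big1 ?addr0.
    by apply: eq_bigr => z zS; rewrite ffunE mxE zS wS.
  by move=> z zS; have := out z zS; rewrite ffunE => ->; rewrite mul0r.
have sup : supported setT x by move=> v; rewrite in_setT.
have := nd x sup x0.
suff -> : iform adj e setT x x = 0 by rewrite ltxx.
rewrite /iform exchange_big /= (sumS (S := S)) => [|w wS]; last first.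
  by rewrite big1 // => v _; rewrite (out w wS) mulr0 mul0r.
rewrite big1 // => w wS.
rewrite (sumS (S := S)) => [|v vS]; last by rewrite out // !mul0r.
transitivity (x w * \sum_(z in S) x z * Imat adj e z w); last by rewrite inS // mulr0.
rewrite mulr_sumr; apply: eq_bigr => v _.
by rewrite [x v * x w]mulrC -mulrA.
Qed.

Lemma iformE n adj e (S : {set 'I_n}) (x : cyc n) v : v \in S ->
  iform adj e S x (Ebase v) = \sum_(w in S) x w * Imat adj e w v.
Proof.
move=> vS; rewrite /iform; apply: eq_bigr => w _.
rewrite (bigD1 v) //= big1 => [|u /andP[_ uv]]; last by rewrite !ffunE (negbTE uv) mulr0 mul0r.
by rewrite !ffunE eqxx mulr1 addr0.
Qed.

Lemma solveP n adj e (S : {set 'I_n}) f v : padM adj e S \in unitmx -> v \in S ->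
  iform adj e S (solve adj e S f) (Ebase v) = f v.
Proof.
move=> uP vS; rewrite iformE //.
rewrite /solve; set r := (X in X *m _).
transitivity (((r *m invmx (padM adj e S)) *m padM adj e S) ord0 v); last by rewrite mulmxKV // mxE vS.
rewrite mxE [RHS](bigID (fun w => w \in S)) /= [X in _ = _ + X]big1 ?addr0.
  by apply: eq_bigr => w wS; rewrite ffunE [padM _ _ _ w v]mxE wS vS.
move=> w wS; rewrite [padM _ _ _ w v]mxE (negbTE wS) /=.
have -> : (w == v) = false by apply/negP => /eqP ewv; rewrite ewv vS in wS.
by rewrite oppr0 mulr0.
Qed.
Lemma Bmono n adj e (B : nat -> {set 'I_n}) (Z : nat -> cyc n) M i :
  NNseq adj e setT B Z M -> forall d, (i + d <= M)%N -> B (i + d).+1 \subset B i.+1.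
Proof.
move=> [_ Zmin _ _ Bsupp]; elim => [|d IH] le; first by rewrite addn0.
have le' : (i + d < M)%N by rewrite -addnS.
apply: (subset_trans _ (IH (ltnW le'))).
have hk : (1 <= (i + d).+1 <= M)%N by rewrite le'.
case: (Zmin _ hk) => [[[[supZ _] _] _] _].
rewrite addnS (Bsupp _ le') (Bsupp _ (ltnW le')) in supZ *.
apply/subsetP => w; rewrite !inE; apply: contraR => wB.
have := supZ w ltac:(by rewrite inE).
have : (ZK adj e setT - Csum Z (i + d)) w == 0.
  by move: wB; rewrite negbK.
have hC : Csum Z (i + d).+1 = Csum Z (i + d) + Z (i + d).+1 by rewrite /Csum big_ord_recr.
rewrite hC => /eqP h1 h2; apply/eqP.
have h3 : forall (a b c : cyc n) w, (a - (b + c)) w = (a - b) w - c w.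
  by move=> a b c u; rewrite !ffunE opprD addrA.
by rewrite h3 h1 h2 subr0.
Qed.

Lemma splitT n (S : {set 'I_n}) (F : 'I_n -> rat) :
  \sum_(w in setT) F w = \sum_(w in S) F w + \sum_(w in ~: S) F w.
Proof. by rewrite (big_setID S) /= setTI setTD. Qed.

Lemma picheckE n adj e (S' : {set 'I_n}) (x : cyc n) v : negdef adj e setT -> v \in S' ->
  iform adj e S' (picheck adj e S' x) (Ebase v)
  = iform adj e setT x (Ebase v) + \sum_(w in ~: S') (ZK adj e setT w - x w) * Imat adj e w v.
Proof.
move=> nd vS.
have hS := solveP (fun v => (e v)%:~R + 2) (padM_unit S' nd) vS.
have hT := solveP (fun v => (e v)%:~R + 2) (padM_unit setT nd) (in_setT v).
rewrite -/(ZK adj e S') -/(ZK adj e setT) !iformE ?in_setT // in hS hT *.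
rewrite (splitT S') in hT; rewrite (splitT S').
have E1 : \sum_(w in S') picheck adj e S' x w * Imat adj e w v =
  \sum_(w in S') ZK adj e S' w * Imat adj e w v - \sum_(w in S') ZK adj e setT w * Imat adj e w v
  + \sum_(w in S') x w * Imat adj e w v.
  rewrite -sumrB -big_split; apply: eq_bigr => w wS.
  rewrite /picheck /restr !ffunE wS in_setT /=; ring.
have E2 : \sum_(w in ~: S') (ZK adj e setT w - x w) * Imat adj e w v =
  \sum_(w in ~: S') ZK adj e setT w * Imat adj e w v - \sum_(w in ~: S') x w * Imat adj e w v.
  by rewrite -sumrB; apply: eq_bigr => w _; rewrite mulrBl.
rewrite E1 E2 hS; lra.
Qed.

Unset Implicit Arguments.
Theorem mainTheorem12 (n : nat) (adj : rel 'I_n) (e : 'I_n -> int)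
    (S' : {set 'I_n}) (B : nat -> {set 'I_n}) (Z : nat -> cyc n) (M i j : nat)
    (lc : cyc n) (m : 'I_n -> nat) :
  decorated_tree adj e ->
  elliptic adj e setT -> elliptic adj e S' ->
  S' \proper setT -> connected_sub adj S' ->
  NNseq adj e setT B Z M ->
  (i <= M)%N -> B i.+1 \subset S' -> S' \proper B i ->
  (i <= j <= M)%N ->
  inSuppj adj e setT (Csum Z j) lc ->
  (forall v, v \in B j.+1 -> m v = 0%N) ->
  lc = Csum Z j + [ffun v => (m v)%:R] ->
  (forall v, v \in S' :\: boundary adj S' ->
     iform adj e S' (picheck adj e S' lc) (Ebase v) = iform adj e setT lc (Ebase v)) /\
  (forall v, v \in boundary adj S' ->
     iform adj e S' (picheck adj e S' lc) (Ebase v)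
       = iform adj e setT lc (Ebase v) - \sum_(u in nbr_out adj S' v) (m u)%:R).
Proof.
move=> [[_ sym] _ _ _ nd] _ _ _ _ NN _ BiS _ /andP[ij jM] _ _ lcE.
have BjS : B j.+1 \subset S'.
  apply: subset_trans BiS; rewrite -(subnKC ij); apply: (Bmono NN); by rewrite subnKC.
have zero : forall w, w \notin S' -> ZK adj e setT w - lc w = - (m w)%:R.
  move=> w wS; have wB : w \notin B j.+1 by apply: contra wS; apply: (subsetP BjS).
  case: NN => _ _ _ _ Bsupp; move: wB; rewrite (Bsupp _ jM) inE negbK => /eqP h.
  rewrite lcE; transitivity ((ZK adj e setT - Csum Z j) w - [ffun v => (m v)%:R] w).
    by rewrite !ffunE opprD addrA.
  by rewrite h sub0r ffunE.
have key : forall v, v \in S' -> iform adj e S' (picheck adj e S' lc) (Ebase v)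
   = iform adj e setT lc (Ebase v) - \sum_(u in nbr_out adj S' v) (m u)%:R.
  move=> v vS; rewrite picheckE //; congr (_ + _).
  rewrite -sumrN big_mkcond [RHS]big_mkcond /=; apply: eq_bigr => w _.
  rewrite !inE; case: (boolP (w \in S')) => wS /=; first by [].
  rewrite (zero w wS) /Imat; have -> : (w == v) = false.
    by apply/negP => /eqP ewv; rewrite ewv vS in wS.
  by rewrite sym; case: (adj v w); rewrite ?mulr1 ?mulr0.
split => v; last by rewrite inE => /andP[vS _]; apply: key.
rewrite !inE => /andP[nb vS]; rewrite key // big1 ?subr0 // => u.
rewrite inE => /andP[uS avu]; move: nb; rewrite vS /=; case/existsP.
by exists u; rewrite uS avu.
Qed.
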